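(* Let $d\geqslant2$, $m\geqslant1$ and $f_1,\dots,f_d\in\mathbb{Z}[X_1,\dots,X_m]$. Let $\mathcal{S}=\{(f_1(n),\dots,f_d(n)):n\in\mathbb{Z}^m\}\subseteq\mathbb{Z}^d$. Let $1\leqslant i\leqslant d$ be such that the map $f_i:\mathbb{Z}^m\to\mathbb{Z}$ is surjective, and let $\mathcal{H}_i=\{(x_1,\dots,x_d)\in\mathbb{Z}^d:x_i=0\}$. Then $\mathcal{H}_i$ is a complement of $\mathcal{S}$ in $\mathbb{Z}^d$. Moreover, if $\mathcal{S}\cap\mathcal{H}_i$ contains exactly one element, then $\mathcal{H}_i$ is a minimal complement of $\mathcal{S}$.
   Context: A nonempty $M\subseteq\mathbb{Z}^d$ is a complement of $W$ if $M+W=\mathbb{Z}^d$, and a minimal complement if no proper subset of $M$ is a complement of $W$. *)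

(* Defs.v *)
From HB Require Import structures.
From mathcomp Require Import all_boot all_order all_algebra.
From mathcomp Require Import mpoly.
Set Implicit Arguments. Unset Strict Implicit. Unset Printing Implicit Defensive.
Import Order.TTheory GRing.Theory Num.Theory.
Local Open Scope ring_scope.

Definition is_complement (d : nat) (M W : 'rV[int]_d -> Prop) : Prop :=
  (exists x, M x) /\
  forall z : 'rV[int]_d, exists a b, M a /\ W b /\ z = a + b.

Definition is_minimal_complement (d : nat) (M W : 'rV[int]_d -> Prop) : Prop :=
  is_complement M W /\
  forall M' : 'rV[int]_d -> Prop,
    (forall x, M' x -> M x) -> is_complement M' W -> forall x, M x -> M' x.

Definition poly_image (d m : nat) (f : 'I_d -> {mpoly int[m]}) : 'rV[int]_d -> Prop :=
  fun x => exists n : 'I_m -> int, x = \row_j (f j).@[n].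

Definition coord_hyperplane (d : nat) (i : 'I_d) : 'rV[int]_d -> Prop :=
  fun x => x ord0 i = 0.

(* Main.v *)
Require Import Defs.
From mathcomp Require Import all_boot all_order all_algebra.
From mathcomp Require Import mpoly.
Local Open Scope ring_scope.
Import GRing.Theory.

Theorem proposition6p2 (d m : nat) (hd : (2 <= d)%N) (hm : (1 <= m)%N)
  (f : 'I_d -> {mpoly int[m]}) (i : 'I_d)
  (hsurj : forall z : int, exists n : 'I_m -> int, (f i).@[n] = z) :
  is_complement (coord_hyperplane i) (poly_image f) /\
  ((exists! x, poly_image f x /\ coord_hyperplane i x) ->
   is_minimal_complement (coord_hyperplane i) (poly_image f)).
Proof.
have HC : is_complement (coord_hyperplane i) (poly_image f).
  split.
    by exists 0; rewrite /coord_hyperplane mxE.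
  move=> z; have [n hn] := hsurj (z ord0 i).
  exists (z - \row_j (f j).@[n]), (\row_j (f j).@[n]); split; last split.
  - by rewrite /coord_hyperplane !mxE hn subrr.
  - by exists n.
  - by rewrite subrK.
split=> // -[x0 [[Sx0 Hx0] Ux0]].
split=> // M' sub [_ HM'] x Hx.
have [a [b [Ma [Sb E]]]] := HM' (x + x0).
have Hb : coord_hyperplane i b.
  have := congr1 (fun M : 'rV[int]_d => M ord0 i) E => /=.
  move: (sub _ Ma) Hx Hx0; rewrite /coord_hyperplane !mxE => A B C. by rewrite A B C !add0r => <-.

have eb : x0 = b by apply: Ux0; split.
have -> : x = a by apply: (addIr x0); rewrite E eb.
exact: Ma.
Qed.
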